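(* Fix an integer $k\ge1$, $q\in(0,1)$ and $\epsilon_\delta>0$, and set $$\delta(k)=\frac{3}{4q}\,\lambda_{\max}^2(AC_kA^T)\frac{\|\bar{\mathbf r}_k\|_2^4}{\big(\mu+\lambda_{\min}(AC_kA^T)\big)^4}+\epsilon_\delta\,k .$$ Define $\zeta_\delta:[1,\infty)\to\mathbb{R}$ by $$\zeta_\delta(\alpha)=1+\frac{\big(\bar{\mathbf r}_k^TM(\alpha)^{-1}\bar{\mathbf r}_k\big)\big(\bar{\mathbf r}_k^TM(\alpha)^{-1}AC_kA^TM(\alpha)^{-1}\bar{\mathbf r}_k\big)}{4\delta(k)},\qquad M(\alpha)=\mu I_m+\alpha AC_kA^T.$$ Then $\zeta_\delta$ maps $[1,\infty)$ into $[1,\infty)$ and satisfies $|\zeta_\delta'(\alpha)|\le q$ for all $\alpha\in[1,\infty)$; consequently the equation $\alpha=\zeta_\delta(\alpha)$ has a unique solution in $[1,\infty)$, and for every $\alpha^0\in[1,\infty)$ the iteration $\alpha^{p+1}=\zeta_\delta(\alpha^p)$ converges to it.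
   Context: Fixed data: $A\in\mathbb{R}^{m\times n}$, $\mathbf d\in\mathbb{R}^m$, $\mu>0$. For an ensemble $\mathbf u_k=(\mathbf u_k^{(1)},\dots,\mathbf u_k^{(N)})$ of vectors in $\mathbb{R}^n$: $\bar{\mathbf u}_k=\frac1N\sum_i\mathbf u_k^{(i)}$, $C_k=\frac1N\sum_i(\mathbf u_k^{(i)}-\bar{\mathbf u}_k)(\mathbf u_k^{(i)}-\bar{\mathbf u}_k)^T$, $\bar{\mathbf r}_k=\mathbf d-A\bar{\mathbf u}_k$. $\lambda_{\max},\lambda_{\min}$ denote the largest and smallest eigenvalues of a symmetric matrix; $\|\cdot\|_2$ is the Euclidean norm. *)

(* Defs.v *)
From HB Require Import structures.
From mathcomp Require Import all_boot all_order all_algebra.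
From mathcomp Require Import all_classical all_reals all_analysis.
Set Implicit Arguments. Unset Strict Implicit. Unset Printing Implicit Defensive.
Import Order.TTheory GRing.Theory Num.Theory.
Import numFieldNormedType.Exports.
Local Open Scope ring_scope.

Section EnKF.
Variable R : realType.

Definition ens_mean (N n : nat) (u : 'I_N -> 'cV[R]_n) : 'cV[R]_n :=
  N%:R^-1 *: \sum_(i < N) u i.

Definition ens_cov (N n : nat) (u : 'I_N -> 'cV[R]_n) : 'M[R]_n :=
  N%:R^-1 *: \sum_(i < N) ((u i - ens_mean u) *m (u i - ens_mean u)^T).

Definition ens_resid (N m n : nat) (A : 'M[R]_(m, n)) (d : 'cV[R]_m)
  (u : 'I_N -> 'cV[R]_n) : 'cV[R]_m := d - A *m ens_mean u.

Definition lambda_max (m : nat) (S : 'M[R]_m) : R :=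
  sup [set a : R | eigenvalue S a].
Definition lambda_min (m : nat) (S : 'M[R]_m) : R :=
  inf [set a : R | eigenvalue S a].

Definition norm2 (m : nat) (v : 'cV[R]_m) : R :=
  Num.sqrt (\sum_(i < m) v i 0 ^+ 2).

Definition Mmat (m n : nat) (mu : R) (A : 'M[R]_(m, n)) (C : 'M[R]_n) (alpha : R)
  : 'M[R]_m := mu%:M + alpha *: (A *m C *m A^T).

Definition delta_k (N m n : nat) (A : 'M[R]_(m, n)) (d : 'cV[R]_m) (mu : R)
  (u : 'I_N -> 'cV[R]_n) (k : nat) (q eps : R) : R :=
  let S := A *m ens_cov u *m A^T in
  3 / (4 * q) * lambda_max S ^+ 2 * norm2 (ens_resid A d u) ^+ 4
    / (mu + lambda_min S) ^+ 4 + eps * k%:R.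

Definition zeta_delta (N m n : nat) (A : 'M[R]_(m, n)) (d : 'cV[R]_m) (mu : R)
  (u : 'I_N -> 'cV[R]_n) (k : nat) (q eps : R) (alpha : R) : R :=
  let S := A *m ens_cov u *m A^T in
  let r := ens_resid A d u in
  let Mi := invmx (Mmat mu A (ens_cov u) alpha) in
  1 + (r^T *m Mi *m r) 0 0 * (r^T *m Mi *m S *m Mi *m r) 0 0
      / (4 * delta_k A d mu u k q eps).

End EnKF.

(* Main.v *)
Set Warnings "-notation-overridden,-ambiguous-paths,-notation-incompatible-prefix,-deprecated".
Require Import Defs.
From HB Require Import structures.
From mathcomp Require Import all_boot all_order all_algebra.
From mathcomp Require Import all_classical all_reals all_analysis.
From mathcomp Require Import complex spectral sesquilinear.
From mathcomp Require Import ring lra.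
Import Order.TTheory GRing.Theory Num.Theory.
Import numFieldNormedType.Exports.
Local Open Scope ring_scope.

Section T.
Variable R : realType.
Local Notation C := R[i].
Local Notation toC := (real_complex R).
Local Open Scope sesquilinear_scope.
Lemma toC_real (x : R) : toC x \is Num.real.
Proof. by rewrite complex_real. Qed.
Lemma toC_conj (x : R) : (toC x)^* = toC x.
Proof. exact: conj_Creal (toC_real x). Qed.
Variable (m : nat) (S : 'M[R]_m).
Hypothesis symS : S^T = S.
Let Sc := map_mx toC S.
Lemma Sc_herm : Sc \is hermsymmx.
Proof.
apply/is_hermitianmxP; rewrite expr0 scale1r.
apply/matrixP => i j; rewrite !mxE toC_conj -[in LHS]symS mxE //.
Qed.
Variables (U : 'M[C]_m) (sp : 'rV[C]_m).
Hypothesis HSc : Sc = invmx U *m diag_mx sp *m U.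
Hypothesis Uu : U \is unitarymx.
Hypothesis spreal : sp \is a realmx.
Let Uunit : U \in unitmx := unitarymx_unit Uu.
Let invU : invmx U = U ^t* := invmx_unitary Uu.
Definition dd (i : 'I_m) : R := complex.Re (sp 0 i).
Lemma ddE i : sp 0 i = toC (dd i).
Proof. by rewrite /dd RRe_real //; apply: (mxOverP spreal). Qed.
Definition TT (g : 'I_m -> R) : 'M[C]_m :=
  invmx U *m diag_mx (\row_i toC (g i)) *m U.
Lemma diag_mul (e f : 'rV[C]_m) :
  diag_mx e *m diag_mx f = diag_mx (\row_i (e 0 i * f 0 i)).
Proof.
apply/matrixP => i j; rewrite mul_diag_mx !mxE.
by case: (i == j); rewrite ?mulr1n ?mulr0n ?mulr0.
Qed.
Lemma TM g h : TT g *m TT h = TT (fun i => g i * h i).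
Proof.
rewrite /TT !mulmxA (mulmxK Uunit) -[_ *m diag_mx _ *m diag_mx _]mulmxA diag_mul.
rewrite [X in diag_mx X](_ : _ = \row_i toC (g i * h i)); first reflexivity.
by apply/rowP => i; rewrite !mxE rmorphM.
Qed.
Lemma T1 : TT (fun _ => 1) = 1%:M.
Proof.
rewrite /TT.
have -> : \row_i toC 1 = const_mx 1 :> 'rV[C]_m.
  by apply/rowP => i; rewrite !mxE rmorph1.
by rewrite diag_const_mx mulmx1 (mulVmx Uunit).
Qed.
Lemma TS : map_mx toC S = TT dd.
Proof.
rewrite -/Sc HSc /TT.
have -> : sp = \row_i toC (dd i) by apply/rowP => i; rewrite mxE ddE.
reflexivity.
Qed.
Lemma Tlin (a b : R) g : TT (fun i => a + b * g i) = (toC a)%:M + toC b *: TT g.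
Proof.
rewrite /TT.
rewrite [X in diag_mx X](_ : _ = const_mx (toC a) + toC b *: \row_i toC (g i)); last first.
  by apply/rowP => i; rewrite !mxE rmorphD rmorphM.
rewrite linearD linearZ /= diag_const_mx.
rewrite mulmxDr mulmxDl mul_mx_scalar -scalemxAl (mulVmx Uunit) scalemx1.
rewrite -!scalemxAr -scalemxAl.
reflexivity.
Qed.

Lemma Tinv g : (forall i, g i != 0) -> invmx (TT g) = TT (fun i => (g i)^-1).
Proof.
move=> gnz.
have H : TT g *m TT (fun i => (g i)^-1) = 1%:M.
  rewrite TM -T1; congr TT; apply/funext => i; exact: mulfV.
have [Hu _] := mulmx1_unit H.
by rewrite -[invmx _]mulmx1 -H mulmxA mulVmx // mul1mx.
Qed.
Definition yv (x : 'cV[R]_m) : 'cV[C]_m := U *m map_mx toC x.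
Definition ww (x : 'cV[R]_m) (i : 'I_m) : R := complex.Re (`|yv x i 0| ^+ 2).
Lemma wwE x i : toC (ww x i) = `|yv x i 0| ^+ 2.
Proof. by rewrite /ww RRe_real // rpredX // normr_real. Qed.
Lemma ww_ge0 x i : 0 <= ww x i.
Proof. by rewrite -ler0c wwE exprn_ge0. Qed.
Lemma Tform x g : ((map_mx toC x)^T *m TT g *m map_mx toC x) 0 0 = toC (\sum_i ww x i * g i).
Proof.
rewrite /TT invU !mulmxA.
have -> : (map_mx toC x)^T *m U^t* = (yv x)^t*.
  rewrite /yv trmx_mul map_mxM.
  rewrite [X in _ = X *m _](_ : _ = (map_mx toC x)^T); first reflexivity.
  by apply/matrixP => i j; rewrite !mxE; exact: toC_conj.
rewrite -mulmxA -/(yv x) mul_mx_diag mxE rmorph_sum.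
apply: eq_bigr => i _; rewrite rmorphM /= wwE normCK !mxE.
by rewrite [LHS]mulrC mulrA.
Qed.
Lemma form_real (X : 'M[R]_m) g x : map_mx toC X = TT g ->
  (x^T *m X *m x) 0 0 = \sum_i ww x i * g i.
Proof.
move=> HX; apply: complexI.
rewrite -Tform -HX map_trmx -!map_mxM.
by rewrite [in RHS]mxE.
Qed.
Lemma ww_sum x : \sum_i ww x i = \sum_i x i 0 ^+ 2.
Proof.
have := @form_real 1%:M (fun _ => 1) x.
rewrite map_mx1 T1 mulmx1 => /(_ erefl).
under [in X in _ = X -> _]eq_bigr do rewrite mulr1.
move=> <-; rewrite mxE; apply: eq_bigr => i _; rewrite !mxE expr2 //.
Qed.
Lemma eig_d i : eigenvalue S (dd i).
Proof.
have : eigenvalue Sc (toC (dd i)).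
  apply/eigenvalueP; exists (row i U).
    rewrite -row_mul HSc !mulmxA (mulmxV Uunit) mul1mx mul_diag_mx.
    by apply/rowP => j; rewrite !mxE ddE.
  apply/negP => /eqP Hr.
  have := unitarymxP Uu => /matrixP /(_ i i).
  rewrite !mxE eqxx /= big1; first by move/eqP; rewrite eq_sym oner_eq0.
  move=> k _; move/rowP: Hr => /(_ k); rewrite !mxE => ->.
  by rewrite mul0r.
by rewrite eigenvalue_root_char -map_char_poly fmorph_root -eigenvalue_root_char.
Qed.
Lemma form_S x : (x^T *m S *m x) 0 0 = \sum_i ww x i * dd i.
Proof. exact: form_real TS. Qed.
Lemma TM_lift (mu al : R) : map_mx toC (mu%:M + al *: S) = TT (fun i => mu + al * dd i).
Proof. by rewrite Tlin map_mxD map_scalar_mx map_mxZ TS. Qed.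
Lemma TMi_lift (mu al : R) : (forall i, mu + al * dd i != 0) ->
  map_mx toC (invmx (mu%:M + al *: S)) = TT (fun i => (mu + al * dd i)^-1).
Proof. by move=> nz; rewrite map_invmx TM_lift Tinv. Qed.
Lemma form_Mi (mu al : R) x : (forall i, mu + al * dd i != 0) ->
  (x^T *m invmx (mu%:M + al *: S) *m x) 0 0 = \sum_i ww x i * (mu + al * dd i)^-1.
Proof. by move=> nz; apply: form_real; rewrite TMi_lift. Qed.
Lemma form_MSM (mu al : R) x : (forall i, mu + al * dd i != 0) ->
  (x^T *m invmx (mu%:M + al *: S) *m S *m invmx (mu%:M + al *: S) *m x) 0 0 =
  \sum_i ww x i * ((mu + al * dd i)^-1 * dd i * (mu + al * dd i)^-1).
Proof.
move=> nz; set Mi := invmx _.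
have -> : x^T *m Mi *m S *m Mi *m x = x^T *m (Mi *m S *m Mi) *m x by rewrite !mulmxA.
apply: form_real.
by rewrite !map_mxM TMi_lift // TS !TM.
Qed.
End T.

Lemma spec_exists (R : realType) (m : nat) (S : 'M[R]_m) : S^T = S ->
  exists d : 'I_m -> R, exists w : 'cV[R]_m -> 'I_m -> R,
  [/\ forall i, eigenvalue S (d i),
      forall x i, 0 <= w x i,
      forall x, \sum_i w x i = \sum_i x i 0 ^+ 2,
      forall x, (x^T *m S *m x) 0 0 = \sum_i w x i * d i &
      (forall (mu al : R) x, (forall i, mu + al * d i != 0) ->
        (x^T *m invmx (mu%:M + al *: S) *m x) 0 0 = \sum_i w x i * (mu + al * d i)^-1) /\
      (forall (mu al : R) x, (forall i, mu + al * d i != 0) ->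
        (x^T *m invmx (mu%:M + al *: S) *m S *m invmx (mu%:M + al *: S) *m x) 0 0 =
        \sum_i w x i * ((mu + al * d i)^-1 * d i * (mu + al * d i)^-1))].
Proof.
move=> symS.
pose Sc := map_mx (real_complex R) S.
have herm := @Sc_herm R m S symS.
have HSc := elimT (@orthomx_spectralP _ _ Sc) (hermitian_normalmx herm).
have Uu := spectral_unitarymx Sc.
have spreal := hermitian_spectral_diag_real herm.
exists (@dd R m (spectral_diag Sc)), (@ww R m (spectralmx Sc)).
split.
- exact: (@eig_d R m S _ _ HSc Uu spreal).
- exact: (@ww_ge0 R m _).
- exact: (@ww_sum R m _ Uu).
- exact: (@form_S R m S _ _ HSc Uu spreal).
split.
- exact: (@form_Mi R m S _ _ HSc Uu spreal).
- exact: (@form_MSM R m S _ _ HSc Uu spreal).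
Qed.
Section Scal.
Variable R : realType.
Variables (m : nat) (d w : 'I_m -> R) (mu : R).
Hypotheses (mu0 : 0 < mu) (d0 : forall i, 0 <= d i) (w0 : forall i, 0 <= w i).
Definition gg i (x : R) := (mu + x * d i)^-1.
Lemma gg_pos (i : 'I_m) (x : R) : 0 <= x -> 0 < mu + x * d i.
Proof. by move=> x0; rewrite ltr_pwDl // mulr_ge0. Qed.
Lemma is_derive_gg (i : 'I_m) (x : R) : 0 <= x -> is_derive x (1:R) (gg i) (- (gg i x)^+2 * d i).
Proof.
move=> x0.
have hf : is_derive x (1:R) (fun y : R => mu + y * d i) (d i).
  apply: is_derive_eq.
  by rewrite add0r mul1r scaler0 add0r /GRing.scale /= mulr1.
have nz : mu + x * d i != 0 by rewrite gt_eqF // gg_pos.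
apply: is_derive_eq (@is_deriveV R (fun y => mu + y * d i) x (d i) 1 nz hf) _.
by rewrite /gg /GRing.scale /= expr2 invfM mulNr.
Qed.
Definition FF (x : R) := \sum_i w i * gg i x.
Definition GG (x : R) := \sum_i w i * (gg i x * d i * gg i x).
Definition HH (x : R) := \sum_i w i * (d i ^+ 2 * gg i x ^+ 3).
Lemma is_derive_FF (x : R) : 0 <= x -> is_derive x (1:R) FF (- GG x).
Proof.
move=> x0.
have -> : FF = \sum_i (fun y => w i * gg i y).
  by rewrite fct_sumE; apply/funext => y.
apply: is_derive_eq.
  apply: is_derive_sum => i.
  have -> : (fun y : R => w i * gg i y) = w i *: gg i by apply/funext.
  exact: (is_deriveZ (w i) (is_derive_gg i x x0)).
rewrite /GG -sumrN; apply: eq_bigr => i _.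
rewrite /GRing.scale /=; ring.
Qed.
Lemma is_derive_Gi (i : 'I_m) (x : R) : 0 <= x ->
  is_derive x (1:R) (fun y => w i * (gg i y * d i * gg i y)) (-2 * (w i * (d i ^+ 2 * gg i x ^+ 3))).
Proof.
move=> x0.
have h := is_deriveZ (w i * d i) (is_deriveX 2 (is_derive_gg i x x0)).
move: h; set F := (X in is_derive _ _ X _).
have -> : F = (fun y => w i * (gg i y * d i * gg i y)).
  by apply/funext => y; rewrite /F /= exprfctE -[_ *: _]/(_ * _); ring.
move/is_derive_eq; apply.
by rewrite -![_ *: _]/(_ * _) /=; ring.
Qed.
Lemma is_derive_GG (x : R) : 0 <= x -> is_derive x (1:R) GG (- 2 * HH x).
Proof.
move=> x0.
have -> : GG = \sum_i (fun y => w i * (gg i y * d i * gg i y)).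
  by rewrite fct_sumE; apply/funext => y.
apply: is_derive_eq.
  by apply: is_derive_sum => i; exact: is_derive_Gi.
by rewrite /HH big_distrr.
Qed.
Variable K : R.
Definition phi (x : R) := 1 + FF x * GG x / K.
Lemma is_derive_phi (x : R) : 0 <= x ->
  is_derive x (1:R) phi ((FF x * (-2 * HH x) + GG x * (- GG x)) / K).
Proof.
move=> x0.
have h := is_deriveD (is_derive_cst (1:R) x 1)
   (is_deriveZ K^-1 (is_deriveM (is_derive_FF x x0) (is_derive_GG x x0))).
move: h; set F := (X in is_derive _ _ X _).
have -> : F = phi.
  apply/funext => y; rewrite /F /phi /=.
  change (1 + K^-1 * (FF y * GG y) = 1 + FF y * GG y / K); by rewrite mulrC.
move/is_derive_eq; apply.
rewrite add0r.
change (K^-1 * (FF x * (-2 * HH x) + GG x * - GG x) = (FF x * (-2 * HH x) + GG x * - GG x) / K); by rewrite mulrC.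
Qed.
Lemma FF_ge0 (x : R) : 0 <= x -> 0 <= FF x.
Proof.
move=> x0; apply: sumr_ge0 => i _; apply: mulr_ge0 => //.
by rewrite invr_ge0 ltW // gg_pos.
Qed.
Lemma gg_ge0 (i : 'I_m) (x : R) : 0 <= x -> 0 <= gg i x.
Proof. by move=> x0; rewrite invr_ge0 ltW // gg_pos. Qed.
Lemma GG_ge0 (x : R) : 0 <= x -> 0 <= GG x.
Proof.
move=> x0; apply: sumr_ge0 => i _; apply: mulr_ge0 => //.
by rewrite !mulr_ge0 ?gg_ge0.
Qed.
Lemma HH_ge0 (x : R) : 0 <= x -> 0 <= HH x.
Proof.
move=> x0; apply: sumr_ge0 => i _; apply: mulr_ge0 => //.
by rewrite !mulr_ge0 ?exprn_ge0 ?gg_ge0.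
Qed.
Variables (l L : R).
Hypothesis hl : forall i, 0 <= l /\ l <= d i.
Hypothesis hL : forall i, d i <= L.
Let W := \sum_i w i.
Let c := (mu + l)^-1.
Lemma sum_bound (t : 'I_m -> R) (b : R) : (forall i, t i <= b) -> \sum_i w i * t i <= b * W.
Proof.
move=> tb; rewrite /W big_distrr /=; apply: ler_sum => i _.
by rewrite mulrC; apply: ler_wpM2r.
Qed.
Lemma gg_le (i : 'I_m) (x : R) : 1 <= x -> gg i x <= c.
Proof.
move=> x1; have [l0 ld] := hl i.
have x0 : 0 <= x by apply: le_trans x1.
rewrite /gg /c lef_pV2 ?posrE ?gg_pos //; last by rewrite ltr_pwDl.
rewrite lerD2l; apply: (le_trans ld).
by rewrite -{1}[d i]mul1r ler_wpM2r // (le_trans l0).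
Qed.
Lemma c_ge0 (i : 'I_m) : 0 <= c.
Proof. by have [l0 _] := hl i; rewrite invr_ge0 addr_ge0 // ltW. Qed.
Lemma bound_main (x : R) : 1 <= x ->
  GG x ^+ 2 + 2 * (FF x * HH x) <= 3 * (L ^+ 2 * W ^+ 2 * c ^+ 4).
Proof.
move=> x1; have x0 : 0 <= x by apply: le_trans x1.
have hF : FF x <= c * W.
  by apply: sum_bound => i; exact: gg_le.
have hG : GG x <= (c * L * c) * W.
  apply: sum_bound => i; have := gg_le i x x1; have := gg_ge0 i x x0.
  have := hL i; have := d0 i; have := c_ge0 i.
  move=> c0 d0' dL g0 gc.
  apply: ler_pM; [exact: mulr_ge0 | exact: g0 | | exact: gc].
  by apply: ler_pM.
have hH : HH x <= (L ^+ 2 * c ^+ 3) * W.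
  apply: sum_bound => i; have := gg_le i x x1; have := gg_ge0 i x x0.
  have := hL i; have := d0 i; have := c_ge0 i.
  move=> c0 d0' dL g0 gc.
  apply: ler_pM; [exact: exprn_ge0 | exact: exprn_ge0 | |].
    by apply: lerXn2r; rewrite ?nnegrE // (le_trans d0').
  by apply: lerXn2r; rewrite ?nnegrE.
have W0 : 0 <= W by apply: sumr_ge0.
have G0 := GG_ge0 x x0; have F0 := FF_ge0 x x0; have H0 := HH_ge0 x x0.
have e1 : GG x ^+ 2 <= (c * L * c * W) ^+ 2.
  by apply: lerXn2r; rewrite ?nnegrE // (le_trans G0).
have e2 : FF x * HH x <= (c * W) * (L ^+ 2 * c ^+ 3 * W) by apply: ler_pM.
apply: (le_trans (lerD e1 (ler_wpM2l _ e2))) => //.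
rewrite le_eqVlt; apply/orP; left; apply/eqP; ring.
Qed.
End Scal.
Local Open Scope classical_set_scope.
Section FP.
Variable R : realType.
Variables (f : R -> R) (q : R).
Hypothesis q1 : q < 1.
Hypothesis f1 : forall a : R, 1 <= a -> 1 <= f a.
Hypothesis fd : forall a : R, 1 <= a -> derivable f a 1 /\ `|f^`() a| <= q.
Lemma f_cont (x : R) : 1 <= x -> {for x, continuous f}.
Proof.
move=> x1; have [dx _] := fd x x1.
by apply: differentiable_continuous; apply/derivable1_diffP.
Qed.
Lemma q0 : 0 <= q.
Proof. have [_ h] := fd 1 (lexx 1); exact: le_trans h. Qed.
Lemma f_within (a b : R) : 1 <= a -> {within `[a, b], continuous f}.
Proof.
move=> a1; apply: continuous_in_subspaceT => x.
rewrite inE /= in_itv /= => /andP[ax _]; apply: f_cont; exact: le_trans ax.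
Qed.
Lemma lip (a b : R) : 1 <= a -> a <= b -> `|f b - f a| <= q * (b - a).
Proof.
move=> a1 ab.
have hd : forall x, x \in `]a, b[%R -> is_derive x 1 f (f^`() x).
  move=> x; rewrite in_itv /= => /andP[ax _].
  have [dx _] := fd x (le_trans a1 (ltW ax)).
  by rewrite derive1E; apply: derivableP.
have [c cab ->] := @MVT_segment R f (f^`()) a b ab hd (f_within a b a1).
rewrite normrM (@ger0_norm _ (b - a)) ?subr_ge0 //.
apply: ler_wpM2r; first by rewrite subr_ge0.
move: cab; rewrite in_itv /= => /andP[ac _].
by have [_ ] := fd c (le_trans a1 ac).
Qed.
Lemma lip2 (a b : R) : 1 <= a -> 1 <= b -> `|f a - f b| <= q * `|a - b|.
Proof.
move=> a1 b1; have [ab|ba] := leP a b.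
  by rewrite distrC [`|a - b|]distrC [`|b - a|]ger0_norm ?subr_ge0 //; apply: lip.
by rewrite [`|a - b|]ger0_norm ?subr_ge0 ?(ltW ba) //; apply: lip => //; apply: ltW.
Qed.
Lemma iter_ge1 (a0 : R) p : 1 <= a0 -> 1 <= iter p f a0.
Proof. by move=> a1; elim: p => //= p IH; apply: f1. Qed.
Lemma fp_exists : exists2 a : R, 1 <= a & a = f a.
Proof.
pose h x := f x - x.
pose B := 1 + (f 1 - 1) / (1 - q).
have q1' : 0 < 1 - q by rewrite subr_gt0.
have f11 := f1 1 (lexx 1).
have B1 : 1 <= B by rewrite lerDl divr_ge0 // ?subr_ge0 // ltW.
have h1 : 0 <= h 1 by rewrite subr_ge0.
have hB : h B <= 0.
  have := lip 1 B (lexx 1) B1; rewrite ler_norml => /andP[_ H].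
  have E : (1 - q) * (B - 1) = f 1 - 1.
    by rewrite /B addrAC subrr add0r mulrC divfK // gt_eqF.
  rewrite mulrBl mul1r in E.
  rewrite /h; lra.
have hc : {within `[1, B], continuous h}.
  apply: continuous_in_subspaceT => x; rewrite inE /= in_itv /= => /andP[x1 _].
  apply: continuousB; first exact: f_cont.
  exact: cvg_id.
have [c cab hc0] : exists2 c, c \in `[1, B]%R & h c = 0.
  apply: (@IVT R h 1 B 0 B1 hc).
  by rewrite ge_min le_max hB h1 orbT.
exists c; first by move: cab; rewrite in_itv /= => /andP[].
by move: hc0; rewrite /h => /eqP; rewrite subr_eq0 => /eqP.
Qed.
Lemma fp_uniq (a b : R) : 1 <= a -> a = f a -> 1 <= b -> b = f b -> b = a.
Proof.
move=> a1 ea b1 eb.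
have := lip2 b a b1 a1; rewrite -ea -eb => H.
have : `|b - a| <= 0.
  have : (1 - q) * `|b - a| <= 0 by rewrite mulrBl mul1r subr_le0.
  by rewrite pmulr_rle0 // subr_gt0.
by rewrite normr_le0 subr_eq0 => /eqP.
Qed.
Lemma fp_cvg (a a0 : R) : 1 <= a -> a = f a -> 1 <= a0 ->
  (fun p : nat => iter p f a0) @ \oo --> a.
Proof.
move=> a1 ea a01.
have Hb : forall p, `|iter p f a0 - a| <= q ^+ p * `|a0 - a|.
  elim => [|p IH] /=; first by rewrite expr0 mul1r.
  rewrite {1}ea; apply: (le_trans (lip2 _ _ (iter_ge1 a0 p a01) a1)).
  by rewrite exprS -mulrA ler_wpM2l // q0.
have qn : (fun p : nat => q ^+ p * `|a0 - a|) @ \oo --> 0.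
  rewrite -(mul0r `|a0 - a|); apply: cvgMl.
  by apply: cvg_expr; rewrite ger0_norm ?q0.
apply: (@squeeze_cvgr _ _ _ _ (fun p => a - q ^+ p * `|a0 - a|) (fun p => a + q ^+ p * `|a0 - a|)).
- apply: nearW => p; have := Hb p; rewrite ler_norml => /andP[H1 H2].
  by apply/andP; split; lra.
- by rewrite -[X in _ --> X]subr0; apply: cvgB => //; exact: cvg_cst.
- by rewrite -[X in _ --> X]addr0; apply: cvgD => //; exact: cvg_cst.
Qed.
End FP.

Section Glue.
Variables (R : realType) (N m n : nat) (A : 'M[R]_(m, n)) (u : 'I_N -> 'cV[R]_n).
Let C := ens_cov u.
Let S := A *m C *m A^T.
Lemma cov_sym : C^T = C.
Proof.
apply/matrixP => i j; rewrite !mxE !summxE.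
congr (_ * _); apply: eq_bigr => k _; rewrite !mxE !big_ord1 !mxE.
exact: mulrC.
Qed.
Lemma S_sym : S^T = S.
Proof. by rewrite /S !trmx_mul trmxK cov_sym mulmxA. Qed.
Lemma S_psd (v : 'rV[R]_m) : 0 <= (v *m S *m v^T) 0 0.
Proof.
have -> : v *m S *m v^T = (v *m A) *m C *m (v *m A)^T by rewrite /S trmx_mul !mulmxA.
rewrite /C /ens_cov -scalemxAr -scalemxAl mxE mulmx_sumr mulmx_suml summxE.
apply: mulr_ge0; first by rewrite invr_ge0 ler0n.
apply: sumr_ge0 => i _.
set z := u i - ens_mean u.
have -> : v *m A *m (z *m z^T) *m (v *m A)^T = (v *m A *m z) *m (v *m A *m z)^T.
  by rewrite !trmx_mul !mulmxA.
set s := v *m A *m z.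
rewrite mxE big_ord1 [s^T _ _]mxE -expr2; exact: sqr_ge0.
Qed.
End Glue.

Lemma eig_facts (R : realType) (m : nat) (S : 'M[R]_m) (dv : 'I_m -> R)
  (wv : 'cV[R]_m -> 'I_m -> R) :
  (forall v : 'rV[R]_m, 0 <= (v *m S *m v^T) 0 0) ->
  (forall i, eigenvalue S (dv i)) ->
  (forall x i, 0 <= wv x i) ->
  (forall x, \sum_i wv x i = \sum_i x i 0 ^+ 2) ->
  (forall x, (x^T *m S *m x) 0 0 = \sum_i wv x i * dv i) ->
  (forall i, 0 <= dv i) /\ (forall i, dv i <= lambda_max S) /\
  (forall i, 0 <= lambda_min S /\ lambda_min S <= dv i).
Proof.
move=> psd eig w0 wsum formS.
have eigv : forall a, eigenvalue S a -> exists2 v : 'rV[R]_m,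
    (v *m S *m v^T) 0 0 = a * \sum_j v 0 j ^+ 2 & 0 < \sum_j v 0 j ^+ 2.
  move=> a /eigenvalueP [v Hv vnz]; exists v.
    rewrite Hv -scalemxAl mxE mxE; congr (_ * _); apply: eq_bigr => j _.
    by rewrite mxE expr2.
  rewrite lt_def sumr_ge0 ?andbT; last by move=> j _; exact: sqr_ge0.
  apply/negP => /eqP H; move/negP: vnz; apply; apply/eqP/rowP => j.
  have Hj : v 0 j ^+ 2 = 0.
    by apply: (psumr_eq0P _ H) => // k _; exact: sqr_ge0.
  by move/eqP: Hj; rewrite sqrf_eq0 mxE => /eqP.
have ge0 : forall a, eigenvalue S a -> 0 <= a.
  move=> a /eigv [v Hv sp]; have := psd v; rewrite Hv.
  by rewrite pmulr_lge0.
have d0 : forall i, 0 <= dv i by move=> i; exact: ge0.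
have ub : forall a, eigenvalue S a -> a <= \sum_j dv j.
  move=> a /eigv [v Hv sp].
  have := formS v^T; rewrite trmxK Hv => H.
  rewrite -(ler_pM2r sp) H.
  have -> : \sum_j v 0 j ^+ 2 = \sum_i wv v^T i.
    by rewrite wsum; apply: eq_bigr => i _; rewrite mxE.
  rewrite mulr_sumr; apply: ler_sum => i _; rewrite mulrC.
  apply: ler_wpM2r => //.
  by rewrite (bigD1 i) //= lerDl sumr_ge0.
pose E := [set a : R | eigenvalue S a].
have hasub : has_ubound E by exists (\sum_j dv j) => a; exact: ub.
have haslb : has_lbound E by exists 0 => a; exact: ge0.
split => //; split => i.
  exact: (ub_le_sup hasub) (eig i).
split; last exact: (ge_inf haslb) (eig i).
by apply: lb_le_inf; [exists (dv i); exact: eig i | move=> a; exact: ge0].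
Qed.

Local Open Scope classical_set_scope.
Theorem proposition4 (R : realType) (N m n : nat) (A : 'M[R]_(m, n))
  (d : 'cV[R]_m) (mu : R) (u : 'I_N -> 'cV[R]_n) (k : nat) (q eps : R) :
  (0 < N)%N -> 0 < mu -> (1 <= k)%N -> 0 < q -> q < 1 -> 0 < eps ->
  let zeta := zeta_delta A d mu u k q eps in
  (forall a : R, 1 <= a -> 1 <= zeta a) /\
  (forall a : R, 1 <= a -> derivable zeta a 1 /\ `|zeta^`() a| <= q) /\
  (exists a : R, [/\ 1 <= a, a = zeta a,
     (forall b : R, 1 <= b -> b = zeta b -> b = a) &
     (forall a0 : R, 1 <= a0 -> (fun p : nat => iter p zeta a0) @ \oo --> a)]).
Proof.
move=> N0 mu0 k1 q0 q1 eps0 zeta.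
have [dv [wv [eigd w0 wsum formS [formMi formMSM]]]] := @spec_exists R m _ (@S_sym R N m n A u).
have [d0 [hL hl]] := @eig_facts R m _ _ _ (@S_psd R N m n A u) eigd w0 wsum formS.
set S := A *m ens_cov u *m A^T in hL hl formMi formMSM.
set r := ens_resid A d u.
set w := wv r.
set L := lambda_max S in hL.
set l := lambda_min S in hl.
set W := \sum_i w i.
have W0 : 0 <= W by apply: sumr_ge0 => i _; exact: w0.
have normE : norm2 r ^+ 4 = W ^+ 2.
  by rewrite /norm2 /W /w wsum -[4%N]/(2 * 2)%N exprM sqr_sqrtr // sumr_ge0 // => i _; exact: sqr_ge0.
set X := L ^+ 2 * W ^+ 2 * (mu + l)^-1 ^+ 4.
have X0 : 0 <= X.
  rewrite /X -[4%N]/(2 * 2)%N exprM.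
  by apply: mulr_ge0; [apply: mulr_ge0|]; exact: sqr_ge0.
set delta := delta_k A d mu u k q eps.
have deltaE : delta = 3 / (4 * q) * X + eps * k%:R.
  rewrite /delta /delta_k /= -/S -/r -/L -/l normE /X exprVn.
  by rewrite -!mulrA.
have delta0 : 0 < delta.
  rewrite deltaE; apply: ltr_wpDl.
    by apply: mulr_ge0 => //; apply: divr_ge0 => //; apply: mulr_ge0 => //; exact: ltW.
  by apply: mulr_gt0 => //; rewrite ltr0n.
set K := 4 * delta.
have K0 : 0 < K by rewrite mulr_gt0.
have nz : forall al : R, 0 <= al -> forall i, mu + al * dv i != 0.
  by move=> al al0 i; rewrite gt_eqF // (@gg_pos R m dv mu mu0 d0 i al al0).
have zeta_eq : forall al : R, 0 <= al -> zeta al = @phi R m dv w mu K al.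
  move=> al al0; rewrite /zeta /zeta_delta /= /Mmat -/S -/r.
  rewrite (formMi mu al r (nz al al0)) (formMSM mu al r (nz al al0)).
  reflexivity.
have part1 : forall a : R, 1 <= a -> 1 <= zeta a.
  move=> a a1; have a0 : 0 <= a := le_trans ler01 a1.
  rewrite zeta_eq // /phi lerDl; apply: divr_ge0; last exact: ltW.
  apply: mulr_ge0; [exact: (@FF_ge0 R m dv w mu mu0 d0 (w0 r) a a0)
                   |exact: (@GG_ge0 R m dv w mu mu0 d0 (w0 r) a a0)].
have part2 : forall a : R, 1 <= a -> derivable zeta a 1 /\ `|zeta^`() a| <= q.
  move=> a a1; have a0 : 0 <= a := le_trans ler01 a1.
  have a0' : 0 < a := lt_le_trans ltr01 a1.
  have near_eq : \forall x \near a, @phi R m dv w mu K x = zeta x.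
    near=> x; rewrite zeta_eq //; apply: ltW.
    by near: x; exact: lt_nbhsr.
  have [hdv hval] := @is_derive_phi R m dv w mu mu0 d0 K a a0.
  split; first exact: near_eq_derivable near_eq hdv.
  rewrite derive1E -(near_eq_derive _ near_eq) hval.
  set F := FF R m dv w mu a; set G := GG R m dv w mu a; set H := HH R m dv w mu a.
  have F0 : 0 <= F := @FF_ge0 R m dv w mu mu0 d0 (w0 r) a a0.
  have G0 : 0 <= G := @GG_ge0 R m dv w mu mu0 d0 (w0 r) a a0.
  have H0 : 0 <= H := @HH_ge0 R m dv w mu mu0 d0 (w0 r) a a0.
  have B := @bound_main R m dv w mu mu0 d0 (w0 r) l L hl hL a a1.
  have -> : (F * (-2 * H) + G * - G) / K = - ((G ^+ 2 + 2 * (F * H)) / K).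
    by rewrite /=; ring.
  rewrite normrN ger0_norm; last first.
    by apply: divr_ge0; [rewrite addr_ge0 ?sqr_ge0 // !mulr_ge0 | exact: ltW].
  rewrite ler_pdivrMr // (le_trans B) //.
  have qK : q * K = 3 * X + 4 * q * (eps * k%:R).
    rewrite /K deltaE; field; by rewrite gt_eqF.
  rewrite qK lerDl; apply: mulr_ge0; first by apply: mulr_ge0 => //; exact: ltW.
  by apply: mulr_ge0; [exact: ltW | exact: ler0n].
split => //; split => //.
have [a a1 ea] := @fp_exists R zeta q q1 part1 part2.
exists a; split => //.
  by move=> b b1 eb; exact: (@fp_uniq R zeta q q1 part2 a b a1 ea b1 eb).
by move=> a0 a01; exact: (@fp_cvg R zeta q q1 part1 part2 a a0 a1 ea a01).
Unshelve. all: by end_near.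
Qed.
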